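(* Consider a cellular network with $n$ base stations $\mathcal{N}=\{1,\dots,n\}$, base station $i$ serving a nonempty set $\mathcal{J}_i$ of users (pairwise disjoint), channel gains $g_{kj}>0$, noise power $\sigma^2>0$, and $$f_i(\mathbf{x};\mathbf{r},\mathbf{p})=\sum_{j\in\mathcal{J}_i}\frac{r_{ij}}{\log\Big(1+\frac{p_i g_{ij}}{\sum_{k\ne i} p_k g_{kj} x_k+\sigma^2}\Big)}.$$ Let $\mathbf{r}>\mathbf{0}$ be a satisfiable rate vector and suppose the load $\mathbf{x}$ is implementable with power $\mathbf{p}$ and rate $\mathbf{r}$, i.e., $\mathbf{x}=\mathbf{f}(\mathbf{x};\mathbf{r},\mathbf{p})$. Then, for any norm $\|\cdot\|$ on $\mathbb{R}^n$, there exists $\delta>0$ such that any load vector $\mathbf{x}'$ with $\|\mathbf{x}'-\mathbf{x}\|\le\delta$ is implementable. Moreover, the implementable load region $\mathcal{L}=\{\mathbf{x}\ge\mathbf{0}:\ \mathbf{x}=\mathbf{f}(\mathbf{x};\mathbf{r},\mathbf{p})\ \text{for some}\ \mathbf{p}\ge\mathbf{0}\}$ is open.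
   Context: Vector inequalities are componentwise; $\log$ is natural logarithm. A rate vector $\mathbf{r}$ is satisfiable if $\rho(\mathbf{\Lambda}(\mathbf{r}))<1$, where $\rho$ is the spectral radius and $\mathbf{\Lambda}(\mathbf{r})$ has entries $\lambda_{ii}=0$ and $\lambda_{ik}=\sum_{j\in\mathcal{J}_i}g_{kj}r_{ij}/g_{ij}$ for $i\ne k$. Given satisfiable $\mathbf{r}$, a load $\mathbf{x}$ is implementable if there exists a power vector $\mathbf{p}$ with $\mathbf{x}=\mathbf{f}(\mathbf{x};\mathbf{r},\mathbf{p})$. *)

(* Defs.v *)
From mathcomp Require Import all_boot all_order all_algebra.
Import Order.TTheory GRing.Theory Num.Theory.
From mathcomp Require Import all_classical all_reals all_analysis.
From mathcomp Require Import complex.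
Import numFieldNormedType.Exports.

Set Implicit Arguments.
Unset Strict Implicit.
Unset Printing Implicit Defensive.

Local Open Scope ring_scope.
Local Open Scope classical_set_scope.

Section Cellular.
Variable R : realType.

Definition cmodulus (z : complex.complex R) : R := Num.sqrt (complex.Re z ^+ 2 + complex.Im z ^+ 2).

Definition eigenvalue_C (n : nat) (A : 'M[R]_n) (l : complex.complex R) : Prop :=
  root (char_poly (map_mx (complex.real_complex R) A)) l.

(* spectral radius: the largest modulus of a (complex) eigenvalue
   (a finite, nonempty set when n >= 1; 0 by convention of [sup] when n = 0) *)
Definition spectral_radius (n : nat) (A : 'M[R]_n) : R :=
  sup [set cmodulus l | l in eigenvalue_C A].

(* Network data: n base stations 'I_n, m users 'I_m.
   J i : {set 'I_m}  = users served by base station i,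
   g k j           = channel gain from base station k to user j,
   s2              = noise power sigma^2,
   r i j           = rate r_{ij} of user j (in J i) served by base station i. *)

Definition Lambda (n m : nat) (J : 'I_n -> {set 'I_m}) (g : 'I_n -> 'I_m -> R)
  (r : 'I_n -> 'I_m -> R) : 'M[R]_n :=
  \matrix_(i, k) (if i == k then 0
                  else \sum_(j in J i) g k j * r i j / g i j).

Definition satisfiable (n m : nat) (J : 'I_n -> {set 'I_m}) (g : 'I_n -> 'I_m -> R)
  (r : 'I_n -> 'I_m -> R) : Prop :=
  spectral_radius (Lambda J g r) < 1.

Definition load_map (n m : nat) (J : 'I_n -> {set 'I_m}) (g : 'I_n -> 'I_m -> R)
  (s2 : R) (r : 'I_n -> 'I_m -> R) (p x : 'rV[R]_n) (i : 'I_n) : R :=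
  \sum_(j in J i)
     r i j / ln (1 + p 0 i * g i j /
                    (\sum_(k < n | k != i) p 0 k * g k j * x 0 k + s2)).

(* x is implementable (for rate r): x >= 0 and x = f(x; r, p) for some
   admissible power vector p (p > 0, needed for f to be defined). *)
Definition implementable (n m : nat) (J : 'I_n -> {set 'I_m}) (g : 'I_n -> 'I_m -> R)
  (s2 : R) (r : 'I_n -> 'I_m -> R) (x : 'rV[R]_n) : Prop :=
  (forall i, 0 <= x 0 i) /\
  exists p : 'rV[R]_n, (forall i, 0 < p 0 i) /\
    (forall i, x 0 i = load_map J g s2 r p x i).

Definition load_region (n m : nat) (J : 'I_n -> {set 'I_m}) (g : 'I_n -> 'I_m -> R)
  (s2 : R) (r : 'I_n -> 'I_m -> R) : set 'rV[R]_n :=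
  [set x | implementable J g s2 r x].

Definition is_norm (n : nat) (N : 'rV[R]_n -> R) : Prop :=
  [/\ forall x, 0 <= N x,
      forall x, N x = 0 -> x = 0,
      forall (a : R) x, N (a *: x) = `|a| * N x
    & forall x y, N (x + y) <= N x + N y].

End Cellular.

(* Main.v *)
Require Import Defs.
From mathcomp Require Import all_boot all_order all_algebra.
Import Order.TTheory GRing.Theory Num.Theory.
From mathcomp Require Import all_classical all_reals all_analysis.
From mathcomp Require Import complex.
From mathcomp Require Import lra ring.
Import numFieldNormedType.Exports.

Local Open Scope ring_scope.
Local Open Scope classical_set_scope.


Section Hfun.
Variable R : realType.

Lemma term_pos (rr a : R) : 0 < rr -> 0 < a -> 0 < rr / ln (1 + a).
Proof. by move=> r0 a0; rewrite divr_gt0 // ln_gt0 // ltrDl. Qed.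

Lemma term_lt (rr a b : R) : 0 < rr -> 0 < a -> a < b ->
  rr / ln (1 + b) < rr / ln (1 + a).
Proof.
move=> r0 a0 ab.
have b0 : 0 < b by apply: lt_trans ab.
rewrite ltr_pM2l // ltf_pV2 ?posrE ?ln_gt0 ?ltrDl //.
by rewrite ltr_ln ?ltrD2l // posrE; lra.
Qed.

Lemma term_le (rr a b : R) : 0 < rr -> 0 < a -> a <= b ->
  rr / ln (1 + b) <= rr / ln (1 + a).
Proof.
move=> r0 a0; rewrite le_eqVlt => /orP[/eqP -> //|ab].
exact/ltW/term_lt.
Qed.

Lemma my_cvg_sum (T : Type) (F : set_system T) {FF : Filter F} I (s : seq I)
  (P : pred I) (f : I -> T -> R) (a : I -> R) :
  (forall j, P j -> f j t @[t --> F] --> a j) ->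
  \sum_(j <- s | P j) f j t @[t --> F] --> \sum_(j <- s | P j) a j.
Proof.
move=> hf; elim: s => [|i s IH].
  rewrite big_nil; under eq_cvg do rewrite big_nil; exact: cvg_cst.
rewrite big_cons; under eq_cvg do rewrite big_cons.
case: ifPn => // Pi.
exact: cvgD (hf _ Pi) IH.
Qed.

Lemma term_cvg (rr c s : R) : 0 < c -> 0 < s ->
  rr / ln (1 + t * c) @[t --> s] --> rr / ln (1 + s * c).
Proof.
move=> c0 s0.
have h1 : (1 + t * c) @[t --> s] --> 1 + s * c.
  apply: cvgD; first exact: cvg_cst.
  apply: cvgM; [exact: cvg_id | exact: cvg_cst].
have h2 : ln (1 + t * c) @[t --> s] --> ln (1 + s * c).
  apply: (continuous_cvg _ _ h1); apply: continuous_ln.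
  have : 0 < s * c by rewrite mulr_gt0.
  lra.
have h3 : (ln (1 + t * c))^-1 @[t --> s] --> (ln (1 + s * c))^-1.
  apply: cvgV => //; rewrite gt_eqF // ln_gt0 // ltrDl mulr_gt0 //.
exact: cvgMl_tmp h3.
Qed.

End Hfun.

Set Implicit Arguments. Unset Strict Implicit.


Section Main.
Variables (R : realType) (n m : nat) (J : 'I_n -> {set 'I_m}) (r : 'I_n -> 'I_m -> R).
Hypothesis HJ : forall i, (0 < #|J i|)%N.
Hypothesis Hr : forall i j, j \in J i -> 0 < r i j.

Definition Hf i (a : 'I_m -> R) := \sum_(j in J i) r i j / ln (1 + a j).

Lemma hasJ i : has (fun j => j \in J i) (index_enum 'I_m).
Proof. case/card_gt0P: (HJ i) => j0 hj0; apply/hasP; exists j0 => //; by rewrite mem_index_enum. Qed.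

Lemma Hf_le i a b : (forall j, j \in J i -> 0 < a j /\ a j <= b j) -> Hf i b <= Hf i a.
Proof. move=> h; apply: ler_sum => j hj; case: (h j hj) => ? ?; apply: term_le => //; exact: Hr. Qed.

Lemma Hf_lt i a b : (forall j, j \in J i -> 0 < a j /\ a j < b j) -> Hf i b < Hf i a.
Proof. move=> h; apply: ltr_sum; first exact: hasJ. move=> j hj; case: (h j hj) => ? ?; apply: term_lt => //; exact: Hr. Qed.

Lemma Hf_pos i a : (forall j, j \in J i -> 0 < a j) -> 0 < Hf i a.
Proof.
move=> h; have := @ltr_sum _ _ (index_enum 'I_m) (fun j => j \in J i) (fun _ => 0)
  (fun j => r i j / ln (1 + a j)) (hasJ i).
rewrite big1 // => H; apply: H => j hj; apply: term_pos; [exact: Hr | exact: h].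
Qed.

Lemma Hf_ivt i (c : 'I_m -> R) y : (forall j, j \in J i -> 0 < c j) -> 0 < y ->
  exists2 s, 0 < s & Hf i (fun j => s * c j) = y.
Proof.
move=> hc y0.
case/card_gt0P: (HJ i) => j0 hj0.
have c0 := hc _ hj0; have r0 := @Hr i j0 hj0.
pose a := r i j0 / (y * c j0).
have a0 : 0 < a by rewrite divr_gt0 // mulr_gt0.
have Sr0 : 0 < \sum_(j in J i) r i j.
  have := @ltr_sum _ _ (index_enum 'I_m) (fun j => j \in J i) (fun _ => 0)
  (fun j => r i j) (hasJ i); rewrite big1 // => H; apply: H => j hj; exact: Hr.
pose M := (\sum_(j in J i) r i j) / y.
have M0 : 0 < M by rewrite divr_gt0.
pose S := \sum_(j in J i) (c j)^-1.
have S0 : forall j, j \in J i -> (c j)^-1 <= S.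
  move=> j hj; rewrite /S (bigD1 j) //= lerDl sumr_ge0 // => k /andP[hk _].
  by rewrite invr_ge0 ltW // hc.
pose b := a + expR M * S.
have ab : a <= b by rewrite lerDl mulr_ge0 // ?expR_ge0 // (le_trans _ (S0 _ hj0)) // invr_ge0 ltW.
pose f := fun s => Hf i (fun j => s * c j).
have fa : y <= f a.
  rewrite /f /Hf (bigD1 j0) //=.
  apply: le_trans (_ : _ <= r i j0 / ln (1 + a * c j0) + 0) _; last first.
    rewrite lerD2l; apply: sumr_ge0 => j /andP[hj _]; apply/ltW/term_pos; first exact: Hr.
    by rewrite mulr_gt0 // hc.
  rewrite addr0.
  apply: le_trans (_ : r i j0 / (a * c j0) <= _).
    suff -> : r i j0 / (a * c j0) = y by [].
    by rewrite /a; field; rewrite !gt_eqF.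
  have ac0 : 0 < a * c j0 by rewrite mulr_gt0.
  rewrite ler_pM2l // lef_pV2 ?posrE ?ln_gt0 ?ltrDl //.
  by apply: le_ln1Dx; lra.
have fb : f b <= y.
  rewrite /f /Hf.
  apply: le_trans (_ : \sum_(j in J i) r i j / M <= _); last first.
    rewrite -mulr_suml; suff -> : (\sum_(j in J i) r i j) / M = y by [].
    by rewrite /M; field; rewrite !gt_eqF.
  apply: ler_sum => j hj.
  have cj := hc _ hj.
  have hb : expR M <= b * c j.
    rewrite -ler_pdivrMr // /b.
    apply: le_trans (_ : expR M * S <= _); last by rewrite lerDr ltW.
    by rewrite ler_pM2l ?expR_gt0 // S0.
  have lnM : M <= ln (1 + b * c j).
    rewrite -[leLHS]expRK ler_ln ?posrE ?expR_gt0 //; last by have := expR_gt0 M; lra.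
    lra.
  rewrite ler_pM2l ?Hr // lef_pV2 ?posrE ?ln_gt0 //.
  by rewrite ltrDl mulr_gt0 // (lt_le_trans a0 ab).
have cont : {within `[a, b], continuous f}.
  apply: continuous_in_subspaceT => s; rewrite inE /= in_itv /= => /andP[has _].
  have s0 : 0 < s by apply: lt_le_trans has.
  rewrite /f /Hf; apply: my_cvg_sum => j hj; exact: term_cvg (hc _ hj) s0.
have hv : Num.min (f a) (f b) <= y <= Num.max (f a) (f b).
  by apply/andP; split; [rewrite ge_min fb orbT | rewrite le_max fa].
have [s hs fs] := IVT ab cont hv.
exists s => //; move: hs; rewrite in_itv /= => /andP[has _]; exact: lt_le_trans has.
Qed.

End Main.

Unset Implicit Arguments. Set Strict Implicit.


Section Main2.
Variables (R : realType) (n m : nat) (J : 'I_n -> {set 'I_m}) (g : 'I_n -> 'I_m -> R)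
  (s2 : R) (r : 'I_n -> 'I_m -> R).
Hypothesis HJ : forall i, (0 < #|J i|)%N.
Hypothesis Hg : forall k j, 0 < g k j.
Hypothesis Hs2 : 0 < s2.
Hypothesis Hr : forall i j, j \in J i -> 0 < r i j.

Definition Dn (p y : 'rV[R]_n) i j := \sum_(k < n | k != i) p 0 k * g k j * y 0 k + s2.

Lemma loadE (p y : 'rV[R]_n) i : load_map J g s2 r p y i = Hf J r i (fun j => p 0 i * (g i j / Dn p y i j)).
Proof. by rewrite /load_map /Hf; apply: eq_bigr => j _; rewrite mulrA. Qed.

Lemma Dn_pos (p y : 'rV[R]_n) (i : 'I_n) (j : 'I_m) : (forall k, 0 <= p 0 k) -> (forall k, 0 <= y 0 k) -> s2 <= Dn p y i j.
Proof.
move=> hp hy; rewrite /Dn lerDr; apply: sumr_ge0 => k _.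
by rewrite !mulr_ge0 // ltW.
Qed.

Lemma Dn_le (p q y : 'rV[R]_n) (i : 'I_n) (j : 'I_m) : (forall k, 0 <= q 0 k) -> (forall k, 0 <= y 0 k) ->
  (forall k, k != i -> q 0 k <= p 0 k) -> Dn q y i j <= Dn p y i j.
Proof.
move=> hq hy hqp; rewrite /Dn lerD2r; apply: ler_sum => k hk.
apply: ler_wpM2r => //; apply: ler_wpM2r; [exact/ltW/Hg | exact: hqp].
Qed.

Lemma mono (p q y : 'rV[R]_n) (i : 'I_n) (u v : R) : (forall k, 0 <= q 0 k) -> (forall k, 0 <= p 0 k) ->
  (forall k, 0 <= y 0 k) ->
  (forall k, k != i -> q 0 k <= p 0 k) -> 0 < u -> u <= v ->
  Hf J r i (fun j => v * (g i j / Dn q y i j)) <= Hf J r i (fun j => u * (g i j / Dn p y i j)).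
Proof.
move=> hq hp hy hqp u0 uv; apply: Hf_le => // j hj.
have dq := Dn_pos q y i j hq hy; have dp := Dn_pos p y i j hp hy.
have dqp := Dn_le p q y i j hq hy hqp.
have gij := Hg i j.
split; first by rewrite mulr_gt0 // divr_gt0 //; exact: lt_le_trans Hs2 dp.
apply: le_trans (_ : u * (g i j / Dn q y i j) <= _); last first.
  apply: ler_wpM2r => //; apply/ltW; rewrite divr_gt0 //; exact: lt_le_trans Hs2 dq.
apply: ler_wpM2l; first exact: ltW.
apply: ler_wpM2l; first exact: ltW.
by rewrite lef_pV2 // posrE; apply: (lt_le_trans Hs2); assumption.
Qed.

Lemma exists_power (y p0 : 'rV[R]_n) : (forall k, 0 < y 0 k) ->
  (forall k, 0 < p0 0 k) -> (forall k, load_map J g s2 r p0 y k <= y 0 k) ->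
  exists p : 'rV[R]_n, (forall k, 0 < p 0 k) /\ forall k, y 0 k = load_map J g s2 r p y k.
Proof.
move=> hy hp0 hl0.
have hy' : forall k, 0 <= y 0 k by move=> k; exact: ltW.
pose S := [set q : 'rV[R]_n | (forall k, 0 < q 0 k) /\ forall k, load_map J g s2 r q y k <= y 0 k].
pose Sk k := [set q 0 k | q in S].
pose ps := \row_k inf (Sk k).
have Sk0 : forall k, Sk k !=set0 by move=> k; exists (p0 0 k); exists p0.
have Sklb : forall k, has_lbound (Sk k).
  by move=> k; exists 0 => _ [q [hq _] <-]; exact: ltW.
have ps_le : forall q, S q -> forall k, ps 0 k <= q 0 k.
  by move=> q hq k; rewrite mxE; apply: inf_lbound => //; exists q.
have ps_ge0 : forall k, 0 <= ps 0 k.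
  by move=> k; rewrite mxE; apply: lb_le_inf => // _ [q [hq _] <-]; exact: ltW.
pose c i j := g i j / Dn ps y i j.
have c_pos : forall i j, 0 < c i j.
  move=> i j; rewrite divr_gt0 //; apply: (lt_le_trans Hs2); exact: Dn_pos.
have step1 : forall i, exists2 s, 0 < s & Hf J r i (fun j => s * c i j) = y 0 i /\ s <= ps 0 i.
  move=> i; have [s s0 hs] := @Hf_ivt R n m J r HJ Hr i (c i) (y 0 i) (fun j _ => c_pos i j) (hy i).
  exists s => //; split => //.
  rewrite mxE; apply: lb_le_inf => // _ [q [hqp hql] <-].
  rewrite leNgt; apply/negP => qs.
  have h1 : Hf J r i (fun j => s * c i j) < Hf J r i (fun j => q 0 i * c i j).
    apply: Hf_lt => // j hj; split; [by rewrite mulr_gt0 | by rewrite ltr_pM2r].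
  have h2 : Hf J r i (fun j => q 0 i * c i j) <= load_map J g s2 r q y i.
    rewrite loadE; apply: mono => //.
    - by move=> k; exact: ltW.
    - by move=> k _; apply: ps_le.
  by have := lt_le_trans h1 (le_trans h2 (hql i)); rewrite hs ltxx.
have ps_pos : forall k, 0 < ps 0 k.
  by move=> k; case: (step1 k) => s s0 [_ h]; exact: lt_le_trans s0 h.
have psS : S ps.
  split => // i; case: (step1 i) => s s0 [hs hsp].
  by rewrite loadE -hs; apply: mono.
exists ps; split; first exact: ps_pos.
move=> i.
case: (step1 i) => s s0 [hs hsp].
pose q := \row_k (if k == i then s else ps 0 k).
have q_le : forall k, q 0 k <= ps 0 k.
  by move=> k; rewrite mxE; case: eqP => [->|_].
have q_pos : forall k, 0 < q 0 k.
  by move=> k; rewrite mxE; case: ifP => _.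
have qS : S q.
  split => // k; rewrite loadE.
  have [->|ki] := eqVneq k i.
    have Dq : forall j, Dn q y i j = Dn ps y i j.
      move=> j; rewrite /Dn; congr (_ + _); apply: eq_bigr => l hl.
      by rewrite mxE (negbTE hl).
    have -> : (fun j => q 0 i * (g i j / Dn q y i j)) = (fun j => s * c i j).
      by apply: funext => j; rewrite Dq mxE eqxx.
    by rewrite hs.
  apply: le_trans (proj2 psS k); rewrite loadE.
  have -> : q 0 k = ps 0 k by rewrite mxE (negbTE ki).
  apply: mono => //; try by move=> l; exact: ltW.
  all: try by move=> l _; exact: q_le.
have := ps_le q qS i; rewrite [q 0 i]mxE eqxx => hle.
have ei : ps 0 i = s by apply/le_anti; rewrite hle hsp.
by rewrite loadE ei -hs.
Qed.

End Main2.


Lemma finmin (R : realType) (I : finType) (c : I -> R) : (forall i, 0 < c i) ->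
  exists2 e : R, 0 < e & forall i, e <= c i.
Proof.
move=> hc; pose T := \sum_i (c i)^-1.
have T0 : 0 <= T by apply: sumr_ge0 => i _; rewrite invr_ge0 ltW.
exists (1 + T)^-1; first by rewrite invr_gt0; lra.
move=> i; rewrite -[c i]invrK lef_pV2 ?posrE ?invr_gt0 //; last lra.
rewrite /T (bigD1 i) //=.
have : 0 <= \sum_(k | k != i) (c k)^-1 by apply: sumr_ge0 => k _; rewrite invr_ge0 ltW.
lra.
Qed.

Section Local.
Variables (R : realType) (n m : nat) (J : 'I_n -> {set 'I_m}) (g : 'I_n -> 'I_m -> R)
  (s2 : R) (r : 'I_n -> 'I_m -> R).
Hypothesis HJ : forall i, (0 < #|J i|)%N.
Hypothesis Hg : forall k j, 0 < g k j.
Hypothesis Hs2 : 0 < s2.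
Hypothesis Hr : forall i j, j \in J i -> 0 < r i j.

Lemma local_impl (x p : 'rV[R]_n) :
  (forall i, 0 <= x 0 i) -> (forall i, 0 < p 0 i) ->
  (forall i, x 0 i = load_map J g s2 r p x i) ->
  exists2 e : R, 0 < e & forall x' : 'rV[R]_n,
    (forall k, `|x' 0 k - x 0 k| <= e) -> implementable J g s2 r x'.
Proof.
move=> hx hp hfix.
have hp' : forall k, 0 <= p 0 k by move=> k; exact: ltW.
have Dge := fun i j => @Dn_pos _ _ _ g s2 Hg p x i j hp' hx.
have xpos : forall i, 0 < x 0 i.
  move=> i; rewrite hfix loadE; apply: Hf_pos => // j hj.
  rewrite mulr_gt0 // divr_gt0 //; exact: lt_le_trans Hs2 (Dge i j).
pose xf i := Hf J r i (fun j => p 0 i * (g i j / (@Dn _ _ _ g s2 p x i j - s2 / 4))).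
have xf_lt : forall i, xf i < x 0 i.
  move=> i; rewrite [in X in _ < X]hfix loadE; apply: Hf_lt => // j hj.
  have := Dge i j; have gij := Hg i j; have pi := hp i => hD.
  split. rewrite mulr_gt0 // divr_gt0 //. move: hD Hs2. lra.
  rewrite ltr_pM2l // ltr_pM2l // ltf_pV2 ?posrE; move: hD Hs2; lra.
pose C i j := \sum_(k < n | k != i) p 0 k * g k j.
have C0 : forall i j, 0 <= C i j.
  by move=> i j; apply: sumr_ge0 => k _; rewrite mulr_ge0 // ltW.
pose cc1 (i : 'I_n) := Num.min (x 0 i / 2) (x 0 i - xf i).
pose cc2 (ij : 'I_n * 'I_m) := s2 / (4 * C ij.1 ij.2 + 4).
have [e1 e10 he1] : exists2 e : R, 0 < e & forall i, e <= cc1 i.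
  apply: finmin => i; rewrite /cc1 /= lt_min; apply/andP; split.
  - by rewrite divr_gt0.
  - by rewrite subr_gt0.
have [e2 e20 he2] : exists2 e : R, 0 < e & forall ij, e <= cc2 ij.
  apply: finmin => -[i j]; rewrite /cc2 /= divr_gt0 //; have := C0 i j; lra.
pose e := Num.min e1 e2.
have e0 : 0 < e by rewrite lt_min e10 e20.
have heA : forall i, e <= x 0 i / 2.
  by move=> i; have := he1 i; rewrite /cc1 !le_min => /andP[h1 _]; rewrite /e ge_min h1.
have heB : forall i, e <= x 0 i - xf i.
  by move=> i; have := he1 i; rewrite /cc1 !le_min => /andP[_ h1]; rewrite /e ge_min h1.
have heC : forall i j, e * (4 * C i j + 4) <= s2.
  move=> i j; have := he2 (i, j); rewrite /cc2 /= => h.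
  have h' : e <= s2 / (4 * C i j + 4) by rewrite /e ge_min h orbT.
  rewrite -ler_pdivlMr // ; have := C0 i j; lra.
exists e => // x' hx'.
have hx'b : forall k, x 0 k - e <= x' 0 k <= x 0 k + e.
  by move=> k; have := hx' k; rewrite ler_distl.
have x'pos : forall k, 0 < x' 0 k.
  move=> k; have := hx'b k; have := heA k; have := xpos k; move=> ? ? /andP[? ?]; lra.
split; first by move=> k; exact: ltW.
apply: (@exists_power R n m J g s2 r HJ Hg Hs2 Hr x' (2 *: p)) => //.
  by move=> k; rewrite mxE mulr_gt0.
move=> i; apply: le_trans (_ : xf i <= _); last first.
  have := heB i; have := hx'b i; move=> /andP[? ?] ?; lra.
rewrite loadE; apply: Hf_le => // j hj.
have hD := Dge i j; have gij := Hg i j; have pi := hp i.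
set D1 := (@Dn _ _ _ g s2 p x i j - s2 / 4).
set D2 := @Dn _ _ _ g s2 (2 *: p) x' i j.
have D1pos : 0 < D1 by rewrite /D1; move: hD Hs2; lra.
have D2pos : 0 < D2.
  apply: lt_le_trans Hs2 _; apply: Dn_pos => // k.
  - by rewrite mxE mulr_ge0.
  - exact: ltW.
have hD2 : D2 <= 2 * D1.
  rewrite /D2 /D1 /Dn.
  have hA : \sum_(k < n | k != i) (2 *: p) 0 k * g k j * x' 0 k <=
     \sum_(k < n | k != i) (2 * (p 0 k * g k j * x 0 k) + 2 * e * (p 0 k * g k j)).
    apply: ler_sum => k _; rewrite mxE.
    have pg : 0 <= p 0 k * g k j by rewrite mulr_ge0 // ltW.
    have := hx'b k; move=> /andP[_ h]; move: pg h; nra.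
  rewrite big_split /= -!mulr_sumr -/(C i j) in hA.
  have := heC i j; have := C0 i j; move: hA Hs2 e0; nra.
split; first by rewrite mulr_gt0 // divr_gt0.
rewrite mxE.
have -> : 2 * p 0 i * (g i j / D2) = p 0 i * (g i j / (D2 / 2)).
  by field; rewrite gt_eqF.
apply: ler_wpM2l; first exact: ltW.
apply: ler_wpM2l; first exact: ltW.
rewrite lef_pV2 ?posrE ?divr_gt0 //; move: hD2; lra.
Qed.

End Local.


Section NormEq.
Variable R : realType.

Lemma coord_le_norm n (v : 'rV[R]_n) k : `|v 0 k| <= `|v|.
Proof.
have /mapP[j Hj ->] : `|v 0 k| \in [seq `|v x.1 x.2| | x : 'I_1 * 'I_n].
  by apply/mapP; exists (ord0, k) => //=; rewrite mem_enum.
by rewrite [leRHS]/Num.Def.normr /= mx_normrE; apply/bigmax_geP; right => /=; exists j.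
Qed.

Variables (n : nat) (N : 'rV[R]_n -> R).
Hypothesis HN : is_norm N.

Lemma N0 : N 0 = 0.
Proof. case: HN => _ _ HZ _. by rewrite -(scale0r 0) HZ normr0 mul0r. Qed.

Lemma N_sum I (s : seq I) (P : pred I) (F : I -> 'rV[R]_n) :
  N (\sum_(i <- s | P i) F i) <= \sum_(i <- s | P i) N (F i).
Proof.
case: HN => _ _ _ HD.
elim/big_rec2: _ => [|i y1 y2 _ Hy]; first by rewrite N0.
by apply: le_trans (HD _ _) _; rewrite lerD2l.
Qed.

Definition Kc := \sum_(j < n) N ('e_j).

Lemma N_le_K w : N w <= Kc * `|w|.
Proof.
case: HN => H0 _ HZ _.
rewrite {1}(row_sum_delta w); apply: le_trans (N_sum _ _ _ _) _.
rewrite /Kc mulr_suml; apply: ler_sum => j _.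
by rewrite HZ mulrC ler_wpM2l // coord_le_norm.
Qed.

Lemma Kc_ge0 : 0 <= Kc.
Proof. case: HN => H0 _ _ _; exact: sumr_ge0. Qed.

Lemma N_dist u v : `|N u - N v| <= N (u - v).
Proof.
case: HN => H0 _ HZ HD.
rewrite ler_norml; apply/andP; split.
- have := HD (v - u) u; rewrite subrK.
  have -> : v - u = (-1) *: (u - v) by rewrite scaleN1r opprB.
  rewrite HZ normrN normr1 mul1r => h; rewrite lerBrDr; lra.
- have := HD (u - v) v; rewrite subrK => h; lra.
Qed.

Lemma N_cont : continuous N.
Proof.
move=> v; apply/(@cvgrPdist_lt _ _ _ (nbhs v) (nbhs_filter v)) => e e0.
have hK := Kc_ge0.
have d0 : 0 < e / (Kc + 1) by rewrite divr_gt0 // ltr_wpDl.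
have := @cvgr_dist_lt _ _ _ (nbhs v) (nbhs_filter v) (fun t : 'rV[R]_n => t) v (@cvg_id _ (nbhs v)) _ d0.
apply: filterS => t hvt.
apply: le_lt_trans (N_dist _ _) _.
apply: le_lt_trans (N_le_K _) _.
rewrite ltr_pdivlMr ?ltr_wpDl // in hvt.
have h0 : 0 <= `|v - t| by [].
nra.
Qed.

Lemma norm_equiv : exists2 c : R, 0 < c & forall v, c * `|v| <= N v.
Proof.
case: HN => H0 Heq HZ HD.
pose A := [set v : 'rV[R]_n | `|v| = 1].
have [[w Aw]|Ae] := pselect (A !=set0); last first.
  exists 1 => // v; rewrite mul1r.
  have [v0|vn0] := eqVneq v 0; first by rewrite v0 normr0 H0.
  exfalso; apply: Ae; exists (`|v|^-1 *: v); rewrite /A /= normrZ normfV normr_id.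
  by rewrite mulVf // normr_eq0.
have cA : compact A.
  apply: bounded_closed_compact.
    exists 1; split; first by rewrite num_real.
    move=> y y1 z Az; rewrite /A /= in Az; by rewrite /= Az; apply: ltW.
  change (closed (Num.Def.normr @^-1` [set (1:R)] : set 'rV[R]_n)).
  apply: closed_comp; last exact: closed_eq.
  by move=> y _; apply: norm_continuous.
have [c Ac cmin] := compact_EVT_min (ex_intro _ w Aw) cA
   (continuous_subspaceT N_cont).
rewrite inE /A /= in Ac.
have Nc : 0 < N c.
  rewrite lt_def H0 andbT; apply/eqP => /Heq c0.
  by move: Ac; rewrite c0 normr0 => /eqP; rewrite eq_sym oner_eq0.
exists (N c) => // v.
have [v0|vn0] := eqVneq v 0; first by rewrite v0 normr0 mulr0 H0.
have nv : 0 < `|v| by rewrite normr_gt0.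
have := cmin (`|v|^-1 *: v).
rewrite !inE /A /= normrZ normfV normr_id mulVf ?gt_eqF // => /(_ erefl).
rewrite HZ normfV normr_id => h.
rewrite mulrC -ler_pdivlMl // mulrC; by rewrite mulrC in h.
Qed.

End NormEq.

Theorem theorem4 (R : realType) (n m : nat)
  (J : 'I_n -> {set 'I_m}) (g : 'I_n -> 'I_m -> R) (s2 : R)
  (r : 'I_n -> 'I_m -> R) (x p : 'rV[R]_n) :
  (forall i, (0 < #|J i|)%N) ->
  (forall i k j, i != k -> j \in J i -> j \notin J k) ->
  (forall k j, 0 < g k j) ->
  0 < s2 ->
  (forall i, forall j, j \in J i -> 0 < r i j) ->
  satisfiable J g r ->
  (forall i, 0 <= x 0 i) ->
  (forall i, 0 < p 0 i) ->
  (forall i, x 0 i = load_map J g s2 r p x i) ->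
  (forall N : 'rV[R]_n -> R, is_norm N ->
     exists2 delta : R, 0 < delta &
       forall x' : 'rV[R]_n, N (x' - x) <= delta -> implementable J g s2 r x')
  /\ open (load_region J g s2 r).
Proof.
move=> HJ _ Hg Hs2 Hr _ hx hp hfix.
split.
  move=> N HN.
  have [e e0 hl] := @local_impl R n m J g s2 r HJ Hg Hs2 Hr x p hx hp hfix.
  have [c c0 hc] := @norm_equiv R n N HN.
  exists (c * e); first by rewrite mulr_gt0.
  move=> x' hN; apply: hl => k.
  have := @coord_le_norm R n (x' - x) k; rewrite !mxE => h1.
  apply: le_trans h1 _.
  have := hc (x' - x); move=> h2.
  have h3 : c * `|x' - x| <= c * e by apply: le_trans h2 hN.
  by rewrite ler_pM2l in h3.
rewrite openE => y [hy [q [hq hqf]]].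
have [e e0 hl] := @local_impl R n m J g s2 r HJ Hg Hs2 Hr y q hy hq hqf.
rewrite /interior; apply/nbhs_ballP; exists e => // z.
rewrite -ball_normE /= => hyz.
apply: hl => k.
have := @coord_le_norm R n (y - z) k; rewrite !mxE => h1.
by rewrite distrC; apply: ltW; apply: le_lt_trans h1 hyz.
Qed.
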